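(* For integers $1\le k\le l$, the element $g_{l,k-1}$ divides $\{k-1\}_q!$, and there is an equality of ideals of $\mathbb{Z}[q,q^{-1}]$ $$\Big(\{l-k+1\}_q,\ \{k\}_q\,\frac{\{k-1\}_q!}{g_{l,k-1}}\Big)=\big(\tilde g_{l,k}\big),\qquad\text{where } \tilde g_{l,k}=\prod_{\substack{m\mid l-k+1\\ 1\le m\le k}}\Phi_m .$$
   Context: In $\mathbb{Z}[q,q^{-1}]$ set $\{i\}_q=q^i-1$, $\{i\}_{q,n}=\{i\}_q\cdots\{i-n+1\}_q$ (equal to $1$ for $n=0$), $\{n\}_q!=\{n\}_{q,n}$. For $0\le i\le k\le l$ set $h_{l,k,i}=\{l-i\}_{q,k-i}\{i\}_q!$ and $g_{l,k}=\mathrm{GCD}(h_{l,k,0},\dots,h_{l,k,k})$ (greatest common divisor in the UFD $\mathbb{Z}[q,q^{-1}]$, defined up to units $\pm q^j$). $(a,b)$ denotes the ideal generated by $a,b$. $\Phi_m$ is the $m$th cyclotomic polynomial. *)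

(* Defs.v *)
From HB Require Import structures.
From mathcomp Require Import all_boot all_order all_algebra all_field.
Set Implicit Arguments. Unset Strict Implicit. Unset Printing Implicit Defensive.
Import GRing.Theory.
Local Open Scope ring_scope.

(* ---------- The ring Z[q, q^-1] ----------
   An element of Z[q,q^-1] is represented by a pair (p, n) with
   p : {poly int} (the variable 'X plays the role of q), standing for q^(-n) * p.
   Every Laurent polynomial has such a representation. *)
Definition laurent := ({poly int} * nat)%type.

Definition lpoly (p : {poly int}) : laurent := (p, 0%N).
Definition lmul (a b : laurent) : laurent := (a.1 * b.1, (a.2 + b.2)%N).
Definition ladd (a b : laurent) : laurent :=
  (a.1 * 'X^(b.2) + b.1 * 'X^(a.2), (a.2 + b.2)%N).
Definition leqL (a b : laurent) : Prop := a.1 * 'X^(b.2) = b.1 * 'X^(a.2).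
Definition ldvd (d a : laurent) : Prop := exists u : laurent, leqL a (lmul u d).
Definition lgcd (x : nat -> laurent) (n : nat) (g : laurent) : Prop :=
  (forall i, (i <= n)%N -> ldvd g (x i)) /\
  (forall d, (forall i, (i <= n)%N -> ldvd d (x i)) -> ldvd d g).
Definition ideal2_eq_principal (a b c : laurent) : Prop :=
  forall x : laurent,
    (exists y z : laurent, leqL x (ladd (lmul y a) (lmul z b))) <->
    (exists w : laurent, leqL x (lmul w c)).

Definition qnum (i : nat) : {poly int} := 'X^i - 1.
Definition qfall (i n : nat) : {poly int} := \prod_(j < n) qnum (i - j).
Definition qfact (n : nat) : {poly int} := qfall n n.
Definition hq (l k i : nat) : {poly int} := qfall (l - i) (k - i) * qfact i.
Definition gtilde (l k : nat) : {poly int} :=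
  \prod_(1 <= m < k.+1 | (m %| (l - k).+1)%N) 'Phi_m.

(* Main.v *)
Require Import Defs.
From HB Require Import structures.
From mathcomp Require Import all_boot all_order all_algebra all_field.
From mathcomp Require Import fraction ring zify.
Import GRing.Theory.
Local Open Scope ring_scope.

Notation FF := {fraction {poly int}}.
Notation "x %:F" := (@FracField.tofrac _ x).
Definition phi (a : laurent) : FF := (a.1)%:F / ('X^(a.2))%:F.

Lemma Xn_frac_neq0 n : ('X^n : {poly int})%:F != 0 :> FF.
Proof. by rewrite tofrac_eq0 monic_neq0 ?monicXn. Qed.

Lemma leqL_phi a b : leqL a b <-> phi a = phi b.
Proof.
rewrite /leqL /phi; split=> [h|/eqP h]; last first.
  rewrite eqr_div ?Xn_frac_neq0 // -!tofracM tofrac_eq in h.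
  exact/eqP.
by apply/eqP; rewrite eqr_div ?Xn_frac_neq0 // -!tofracM h.
Qed.

Lemma phi_mul a b : phi (lmul a b) = phi a * phi b.
Proof.
rewrite /phi /lmul /= exprD !tofracM invfM.
by rewrite mulrACA.
Qed.

Lemma fracaux (K : fieldType) (x y A B : K) : A != 0 -> B != 0 ->
  (x * B + y * A) * (A^-1 * B^-1) = x / A + y / B.
Proof. move=> hA hB. field. by rewrite hA hB. Qed.

Lemma phi_add a b : phi (ladd a b) = phi a + phi b.
Proof.
rewrite /phi /ladd /= exprD !tofracM tofracD !tofracM invfM.
set A := ('X^(a.2))%:F; set B := ('X^(b.2))%:F.
have hA : A != 0 by apply: Xn_frac_neq0.
have hB : B != 0 by apply: Xn_frac_neq0.
exact: (fracaux _ _ _ _ _ hA hB).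
Qed.

Lemma phi_lpoly p : phi (lpoly p) = p%:F.
Proof. by rewrite /phi /= expr0 tofrac1 invr1 mulr1. Qed.

Lemma ldvd_phi d a : ldvd d a <-> exists u, phi a = phi u * phi d.
Proof.
split=> [[u /leqL_phi]|[u h]]; first by rewrite phi_mul; exists u.
by exists u; apply/leqL_phi; rewrite phi_mul.
Qed.

Definition P (m : nat) : {poly int} := if m is 0 then 'X else 'Phi_m.
Definition CP (M : nat) (e : nat -> nat) : {poly int} := \prod_(m < M) P m ^+ e m.

Lemma P_monic m : P m \is monic.
Proof. by case: m => [|m]; rewrite /P ?monicX ?Cyclotomic_monic. Qed.

Lemma CP_monic M e : CP M e \is monic.
Proof. by apply: monic_prod => i _; apply/monic_exp/P_monic. Qed.

Lemma CP_neq0 M e : CP M e != 0.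
Proof. exact/monic_neq0/CP_monic. Qed.

Lemma CP_ext M e1 e2 : (forall m, (m < M)%N -> e1 m = e2 m) -> CP M e1 = CP M e2.
Proof. by move=> h; apply: eq_bigr => i _; rewrite h. Qed.

Lemma CP_add M e1 e2 : CP M (fun m => e1 m + e2 m)%N = CP M e1 * CP M e2.
Proof. by rewrite /CP -big_split; apply: eq_bigr => i _; rewrite exprD. Qed.

Lemma CP_split M e1 e2 : (forall m, (m < M)%N -> e1 m <= e2 m)%N ->
  CP M e2 = CP M e1 * CP M (fun m => e2 m - e1 m)%N.
Proof.
by move=> h; rewrite -CP_add; apply: CP_ext => m hm; rewrite subnKC ?h.
Qed.

Lemma CP_zero M : CP M (fun _ => 0%N) = 1.
Proof. by rewrite /CP big1. Qed.

Lemma CP_prod M I (r : seq I) (F : I -> nat -> nat) :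
  \prod_(i <- r) CP M (F i) = CP M (fun m => \sum_(i <- r) F i m)%N.
Proof.
rewrite /CP exchange_big /=; apply: eq_bigr => m _.
by rewrite prodrXr.
Qed.

Lemma CP_factor M e a : (a < M)%N -> (0 < e a)%N -> exists r, CP M e = P a * r.
Proof.
move=> aM ea; rewrite /CP (bigD1 (Ordinal aM)) //=.
exists (P a ^+ (e a).-1 * \prod_(i < M | i != Ordinal aM) P i ^+ e i).
by rewrite mulrA -exprS prednK.
Qed.

Definition ex (j m : nat) : nat := ((0 < m) && (m %| j))%N.

Lemma Xn1_CP M j : (0 < j)%N -> (j < M)%N -> 'X^j - 1 = CP M (ex j).
Proof.
move=> j0 jM; rewrite -prod_Cyclotomic //.
have -> : CP M (ex j) = \prod_(m < M | ((0 < m) && (m %| j))%N) 'Phi_m.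
  rewrite /CP [RHS]big_mkcond /=; apply: eq_bigr => i _.
  rewrite /ex; case h: ((0 < i) && (i %| j))%N.
    move/andP: h => [i0 _].
    by rewrite expr1 /P; case: (nat_of_ord i) i0.
  by rewrite expr0.
rewrite -(big_mkord (fun m => (0 < m) && (m %| j))%N) -[RHS]big_filter.
apply: perm_big; apply: uniq_perm; rewrite ?divisors_uniq ?filter_uniq ?iota_uniq //.
move=> d; rewrite mem_filter /index_iota subn0 mem_iota -dvdn_divisors // add0n.
case dj: (d %| j)%N; last by rewrite andbF.
have := dvdn_leq j0 dj; have -> : (0 < d)%N by apply: dvdn_gt0 dj.
by move=> h /=; rewrite (leq_ltn_trans h jM).
Qed.

Lemma qfall_CP M a b : (b <= a)%N -> (a < M)%N ->
  qfall a b = CP M (fun m => \sum_(t < b) ex (a - t) m)%N.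
Proof.
move=> ba aM; rewrite /qfall -CP_prod; apply: eq_bigr => t _.
rewrite /qnum (@Xn1_CP M) //; first by rewrite subn_gt0 (leq_trans (ltn_ord t)).
exact: leq_ltn_trans (leq_subr _ _) aM.
Qed.

Lemma sum_ex_div m a : (0 < m)%N -> (\sum_(t < a) ex (a - t) m)%N = (a %/ m)%N.
Proof.
move=> m0; elim: a => [|a IH]; first by rewrite big_ord0 div0n.
rewrite big_ord_recl subn0 /=.
under eq_bigr => t _ do rewrite /bump /= add1n subSS.
by rewrite IH divnS // /ex m0.
Qed.

Definition Eh (l K i m : nat) : nat :=
  (\sum_(t < K - i) ex (l - i - t) m + \sum_(t < i) ex (i - t) m)%N.

Lemma hq_CP l K i : (K <= l)%N -> (i <= K)%N -> hq l K i = CP l.+1 (Eh l K i).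
Proof.
move=> Kl iK; rewrite /hq /qfact /Eh CP_add.
rewrite (@qfall_CP l.+1 (l - i)) ?(@qfall_CP l.+1 i) //.
- by rewrite ltnS (leq_trans iK).
- by apply: leq_sub2r.
- by rewrite ltnS leq_subr.
Qed.

Lemma Eh_div l K i m n : (0 < m)%N -> (m %| n)%N -> l = (n + K)%N -> (i <= K)%N ->
  Eh l K i m = ((K - i) %/ m + i %/ m)%N.
Proof.
move=> m0 mn -> iK; rewrite /Eh (sum_ex_div _ _ m0); congr (_ + _)%N.
rewrite -(sum_ex_div _ _ m0); apply: eq_bigr => t _.
rewrite /ex; congr (nat_of_bool (_ && _)).
rewrite -addnBA // -addnBA; last first.
  exact: ltnW (ltn_ord t).
by rewrite dvdn_addr.
Qed.

Lemma Eh0 l K i : Eh l K i 0 = 0%N.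
Proof. by rewrite /Eh !big1. Qed.

Definition gt (k n m : nat) : nat := [&& (0 < m), (m <= k) & (m %| n)]%N.

Lemma gtilde_CP l k : (k <= l)%N -> gtilde l k = CP l.+1 (gt k (l - k).+1).
Proof.
move=> kl.
have -> : CP l.+1 (gt k (l-k).+1) = \prod_(m < l.+1 | gt k (l-k).+1 m != 0%N) 'Phi_m.
  rewrite /CP [RHS]big_mkcond /=; apply: eq_bigr => i _.
  rewrite /gt; case h: [&& (0 < i), (i <= k) & (i %| (l-k).+1)]%N.
    move/and3P: h => [i0 _ _].
    by rewrite expr1 /P; case: (nat_of_ord i) i0.
  by rewrite expr0.
rewrite -(big_mkord (fun m => gt k (l-k).+1 m != 0%N)) -[RHS]big_filter.
rewrite /gtilde -big_filter.
apply: perm_big; apply: uniq_perm; rewrite ?filter_uniq ?iota_uniq //.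
move=> d; rewrite !mem_filter /index_iota !mem_iota subn0 add0n subn1 /= add1n ltnS /gt.
case: (d %| (l - k).+1)%N; rewrite ?andbF ?andbT //=.
case: (0 < d)%N => //=; case dk: (d <= k)%N => //=.
by rewrite ltnS (leq_trans dk).
Qed.

Section FieldGcd.
Variable F : fieldType.
Variable M : nat.
Variable p : nat -> {poly F}.
Hypothesis pco : forall a b, (a < M)%N -> (b < M)%N -> a != b -> coprimep (p a) (p b).

Definition CPF (e : nat -> nat) := \prod_(m < M) p m ^+ e m.

Lemma CPF_split e1 e2 : (forall m, (m < M)%N -> e1 m <= e2 m)%N ->
  CPF e2 = CPF e1 * CPF (fun m => e2 m - e1 m)%N.
Proof.
move=> h; rewrite /CPF -big_split; apply: eq_bigr => m _ /=.
by rewrite -exprD subnKC ?h.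
Qed.

Lemma CPF_coprime e1 e2 : (forall m, (m < M)%N -> e1 m = 0%N \/ e2 m = 0%N) ->
  coprimep (CPF e1) (CPF e2).
Proof.
move=> h; rewrite /CPF.
apply: (big_ind (fun z => coprimep z _)); first exact: coprime1p.
  by move=> x y hx hy; rewrite coprimepMl hx hy.
move=> a _.
have [ea0|ea0] := eqVneq (e1 a) 0%N; first by rewrite ea0 expr0 coprime1p.
apply: coprimep_expl.
apply: (big_ind (fun z => coprimep _ z)); first exact: coprimep1.
  by move=> x y hx hy; rewrite coprimepMr hx hy.
move=> b _.
have [eb0|eb0] := eqVneq (e2 b) 0%N; first by rewrite eb0 expr0 coprimep1.
apply: coprimep_expr; apply: pco => //.
apply/negP => /eqP /val_inj ab; subst b.
by case: (h a (ltn_ord a)) => hh; [move: ea0 | move: eb0]; rewrite hh.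
Qed.

Lemma dvdp_coprime_cancel (d c x y : {poly F}) :
  coprimep x y -> d %| c * x -> d %| c * y -> d %| c.
Proof.
move=> /Bezout_eq1_coprimepP [[u v] /= h] hx hy.
have -> : c = u * (c * x) + v * (c * y).
  by rewrite !mulrA ![_ * c]mulrC -!mulrA -mulrDr h mulr1.
by rewrite dvdp_add // dvdp_mull.
Qed.

Lemma CPF_gcd2 d e1 e2 : d %| CPF e1 -> d %| CPF e2 ->
  d %| CPF (fun m => minn (e1 m) (e2 m)).
Proof.
move=> h1 h2.
rewrite (@CPF_split (fun m => minn (e1 m) (e2 m)) e1) in h1; last by move=> m _; rewrite geq_minl.
rewrite (@CPF_split (fun m => minn (e1 m) (e2 m)) e2) in h2; last by move=> m _; rewrite geq_minr.
apply: dvdp_coprime_cancel h1 h2; apply: CPF_coprime => m _.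
case: (leqP (e1 m) (e2 m)) => h.
  by left; rewrite subnn.
by right; rewrite subnn.
Qed.

End FieldGcd.

Definition comax (a b : {poly int}) := exists u v, u * a + v * b = 1.

Lemma comax_sym a b : comax a b -> comax b a.
Proof. by move=> [u [v h]]; exists v, u; rewrite addrC. Qed.

Lemma comax_mulr a b1 b2 : comax a b1 -> comax a b2 -> comax a (b1 * b2).
Proof.
move=> [u1 [v1 h1]] [u2 [v2 h2]].
exists (u1 * u2 * a + u1 * v2 * b2 + v1 * b1 * u2), (v1 * v2).
rewrite -[1]mulr1 -{1}h1 -h2; ring.
Qed.

Lemma comax_dvdl a b c r : comax a b -> a = c * r -> comax c b.
Proof. by move=> [u [v h]] e; exists (u * r), v; rewrite -h e mulrA mulrAC. Qed.

Lemma comax_1r a : comax a 1.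
Proof. by exists 0, 1; rewrite mul0r add0r mulr1. Qed.

Lemma comax_expr a b n : comax a b -> comax a (b ^+ n).
Proof.
move=> h; elim: n => [|n IH]; first by rewrite expr0; apply: comax_1r.
by rewrite exprS; apply: comax_mulr.
Qed.

Lemma comax_prodr a M (f : 'I_M -> {poly int}) :
  (forall i, comax a (f i)) -> comax a (\prod_(i < M) f i).
Proof.
move=> h; apply: (big_ind (comax a)); first exact: comax_1r.
  by move=> x y; apply: comax_mulr.
by move=> i _; apply: h.
Qed.

Lemma comax_CP M ea eb :
  (forall a b, (a < M)%N -> (b < M)%N -> (0 < ea a)%N -> (0 < eb b)%N -> comax (P a) (P b)) ->
  comax (CP M ea) (CP M eb).
Proof.
move=> h; apply: comax_sym; apply: comax_prodr => a.
have [hA|hA] := posnP (ea a); first (rewrite hA expr0; exact: comax_1r).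
apply: comax_expr; apply: comax_sym; apply: comax_prodr => b.
have [hB|hB] := posnP (eb b); first (rewrite hB expr0; exact: comax_1r).
by apply: comax_expr; apply: h.
Qed.

Definition R (c s : nat) : {poly int} := \sum_(i < s) ('X^c) ^+ i.

Lemma R_eq c s : 'X^(c * s) - 1 = ('X^c - 1) * R c s.
Proof. by rewrite exprM subrX1. Qed.

Lemma Xc1_neq0 c : (0 < c)%N -> ('X^c - 1 : {poly int}) != 0.
Proof. by move=> c0; rewrite -polyC1 monic_neq0 // monicXnsubC. Qed.

Lemma R_add c s r : (0 < c)%N -> R c (s + r) = 'X^(c * r) * R c s + R c r.
Proof.
move=> c0; apply: (mulfI (Xc1_neq0 _ c0)).
rewrite -R_eq mulrDr mulrCA -!R_eq mulnDr exprD.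
by rewrite mulrBr mulr1 addrA subrK mulrC.
Qed.

Lemma R1 c : R c 1 = 1.
Proof. by rewrite /R big_ord1 expr0. Qed.

Lemma comax_R c : (0 < c)%N -> forall s t, gcdn s t = 1%N -> comax (R c s) (R c t).
Proof.
move=> c0 s t; have [N] := ubnP (s + t); elim: N s t => // N IH s t st gst.
have [s0|s0] := posnP s.
  move: gst; rewrite s0 gcd0n => ->. rewrite R1. exact: comax_1r.
have [t0|t0] := posnP t.
  move: gst; rewrite t0 gcdn0 => ->; rewrite R1; apply: comax_sym; exact: comax_1r.
wlog le_st : s t st gst s0 t0 / (s <= t)%N.
  move=> W; case: (leqP s t) => h; first exact: W.
  apply: comax_sym; apply: W => //; first by rewrite addnC.
    by rewrite gcdnC.
  exact: ltnW.
have [r er] : exists r, t = (s + r)%N by exists (t - s)%N; rewrite subnKC.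
subst t; rewrite gcdnDl in gst.
have lt : (s + r < N)%N by lia.
have [u [v h]] := IH _ _ lt gst.
exists (u - v * 'X^(c * r)), v.
rewrite R_add // -h; ring.
Qed.

Lemma R_CP c s M : (0 < c)%N -> (0 < s)%N -> (c * s < M)%N ->
  R c s = CP M (fun m => ex (c * s) m - ex c m)%N.
Proof.
move=> c0 s0 csM.
have cM : (c < M)%N by apply: leq_ltn_trans csM; rewrite leq_pmulr.
apply: (mulfI (Xc1_neq0 _ c0)); rewrite -R_eq.
rewrite (@Xn1_CP M) ?muln_gt0 ?c0 //.
rewrite (@Xn1_CP M c) //; apply: CP_split => m _.
rewrite /ex; case: (0 < m)%N => //=.
by case hm: (m %| c)%N => //=; rewrite dvdn_mulr.
Qed.

Lemma comax_Phi n k a b : (0 < n)%N -> (0 < b)%N -> (b <= k)%N -> (k < a)%N ->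
  (a %| n)%N -> ~~ (b %| n)%N -> comax (P a) (P b).
Proof.
move=> n0 b0 bk ka an bn.
set c := gcdn n b.
have c0 : (0 < c)%N by rewrite gcdn_gt0 n0.
have cn : (c %| n)%N by apply: dvdn_gcdl.
have cb : (c %| b)%N by apply: dvdn_gcdr.
set s := (n %/ c)%N; set t := (b %/ c)%N.
have ns : n = (c * s)%N by rewrite mulnC divnK.
have bt : b = (c * t)%N by rewrite mulnC divnK.
have gst : gcdn s t = 1%N.
  apply/eqP; rewrite -(eqn_pmul2l c0) muln_gcdr -ns -bt muln1 //.
have s0 : (0 < s)%N by move: n0; rewrite ns muln_gt0 => /andP[].
have t0 : (0 < t)%N by move: b0; rewrite bt muln_gt0 => /andP[].
set M := (n + b).+1.
have hs := @R_CP c s M c0 s0.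
have ht := @R_CP c t M c0 t0.
rewrite -ns in hs; rewrite -bt in ht.
have nM : (n < M)%N by rewrite ltnS leq_addr.
have bM : (b < M)%N by rewrite ltnS leq_addl.
have aM : (a < M)%N by apply: leq_ltn_trans (dvdn_leq n0 an) nM.
have a0 : (0 < a)%N by apply: leq_ltn_trans ka.
have cb' : (c <= b)%N by apply: dvdn_leq.
have [r1 e1] : exists r, R c s = P a * r.
  rewrite (hs nM); apply: CP_factor => //.
  rewrite /ex a0 an /=.
  case ac: (a %| c)%N => //.
  by have := dvdn_leq c0 ac; lia.
have [r2 e2] : exists r, R c t = P b * r.
  rewrite (ht bM); apply: CP_factor => //.
  rewrite /ex b0 dvdnn /=.
  case bc: (b %| c)%N => //.
  by move: bn; rewrite (dvdn_trans bc cn).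
have h0 := @comax_R c c0 s t gst.
have h1 := comax_dvdl _ _ _ _ h0 e1.
have h2 := comax_dvdl _ _ _ _ (comax_sym _ _ h1) e2.
exact: comax_sym _ _ h2.
Qed.

Notation pQ := (map_poly (intr : int -> rat)).

Lemma CP_pt M a k : (a < M)%N -> CP M (fun m => if m == a then k else 0%N) = P a ^+ k.
Proof.
move=> aM; rewrite /CP (bigD1 (Ordinal aM)) //= eqxx big1 ?mulr1 //.
move=> i ne; have -> : (nat_of_ord i == a) = false.
  by apply/negbTE; apply: contra ne => /eqP e; apply/eqP/val_inj.
by rewrite expr0.
Qed.

Lemma CP_dvd2 M a b : (a < M)%N -> (b < M)%N -> a != b ->
  CP M (fun m => (if m == a then 1 else 0) + (if m == b then 1 else 0))%N = P a * P b.
Proof.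
by move=> aM bM ab; rewrite CP_add !CP_pt // !expr1.
Qed.

Lemma pQ_CP M e : pQ (CP M e) = CPF _ M (fun m => pQ (P m)) e.
Proof.
rewrite /CP /CPF rmorph_prod; apply: eq_bigr => i _; by rewrite rmorphXn.
Qed.

Lemma Phi_dvd_Xn1 b : (0 < b)%N -> exists r, 'X^b - 1 = P b * r.
Proof.
move=> b0; rewrite (@Xn1_CP b.+1 b) //; apply: CP_factor => //.
by rewrite /ex b0 dvdnn.
Qed.

Lemma coprime_PQ0 b : (0 < b)%N -> coprimep (pQ (P 0)) (pQ (P b)).
Proof.
move=> b0; have [r e] := Phi_dvd_Xn1 _ b0.
apply: (@coprimep_dvdl _ (pQ ('X^b - 1))).
  by rewrite e rmorphM /= dvdp_mulr.
rewrite /P map_polyX coprimep_sym coprimepX rmorphB rmorph1 /= map_polyXn.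
by rewrite /root !hornerE expr0n eqn0Ngt b0 /=.
Qed.

Lemma coprime_PQ a b : a != b -> coprimep (pQ (P a)) (pQ (P b)).
Proof.
wlog ab : a b / (a < b)%N.
  move=> W ne; case: (ltngtP a b) => h; first exact: W.
    by rewrite coprimep_sym; apply: W => //; rewrite eq_sym.
  by move: ne; rewrite h eqxx.
move=> ne; have [a0|a0] := posnP a.
  by rewrite a0; apply: coprime_PQ0; rewrite -a0 (leq_ltn_trans _ ab).
set N := (a * b)%N.
have N0 : (0 < N)%N by rewrite muln_gt0 a0 (leq_ltn_trans _ ab).
have aN : (a <= N)%N by rewrite leq_pmulr // (leq_ltn_trans _ ab).
have bN : (b <= N)%N by rewrite leq_pmull.
have e : 'X^N - 1 = P a * P b * CP N.+1 (fun m => ex N m -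
     ((if m == a then 1 else 0) + (if m == b then 1 else 0)))%N.
  rewrite (@Xn1_CP N.+1 N) // -(@CP_dvd2 N.+1 a b) // -CP_split // => m _.
  rewrite /ex; case: (eqVneq m a) => [->|ma]; first by rewrite (negbTE ne) a0 dvdn_mulr.
  case: (eqVneq m b) => [->|mb] //=.
  by rewrite (leq_ltn_trans _ ab) // dvdn_mull.
apply: (@separable_coprime _ (pQ ('X^N - 1))).
  rewrite rmorphB rmorph1 /= map_polyXn; apply: separable_Xn_sub_1.
  by rewrite Num.Theory.pnatr_eq0 -lt0n.
by rewrite e !rmorphM /= dvdp_mulr.
Qed.

Fixpoint mumin (f : nat -> nat -> nat) (j : nat) (m : nat) : nat :=
  match j with 0 => f 0%N m | S j' => minn (mumin f j' m) (f j m) end.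

Lemma mumin_le f j i m : (i <= j)%N -> (mumin f j m <= f i m)%N.
Proof.
elim: j => [|j IH] /=; first by rewrite leqn0 => /eqP ->.
rewrite leq_eqVlt ltnS => /orP [/eqP ->|h]; first by rewrite geq_minr.
exact: leq_trans (geq_minl _ _) (IH h).
Qed.

Lemma mumin_ge f j m L : (forall i, (i <= j)%N -> (L <= f i m)%N) -> (L <= mumin f j m)%N.
Proof.
elim: j => [|j IH] h /=; first exact: h.
by rewrite leq_min IH ?h // => i hi; apply: h; apply: leq_trans hi _.
Qed.

Definition shiftE (N : nat) (e : nat -> nat) : nat -> nat :=
  fun m => if m == 0%N then N else e m.

Lemma CP_shift M N e : (0 < M)%N -> e 0%N = 0%N -> CP M (shiftE N e) = 'X^N * CP M e.
Proof.
move=> M0 e0.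
rewrite (@CP_ext M (shiftE N e) (fun m => (if m == 0%N then N else 0%N) + e m)%N).
  by rewrite CP_add CP_pt.
by move=> m _; rewrite /shiftE; case: eqP => [->|]; rewrite ?e0 ?addn0.
Qed.

Lemma ldvd_lpoly_ex d h : ldvd d (lpoly h) -> exists N w, 'X^N * h = d.1 * w.
Proof.
move=> [u]; rewrite /leqL /lmul /= expr0 mulr1 => e.
by exists (u.2 + d.2)%N, u.1; rewrite mulrC e mulrC.
Qed.

Section GcdPart.
Variables l K : nat.
Hypothesis Kl : (K <= l)%N.
Local Notation M := l.+1.
Local Notation E := (Eh l K).

Lemma mumin0 j : mumin E j 0%N = 0%N.
Proof. by have := mumin_le E j 0 0 (leq0n j); rewrite Eh0 leqn0 => /eqP. Qed.

Lemma gcd_step (d : {poly int}) :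
  (forall i, (i <= K)%N -> exists N w, 'X^N * hq l K i = d * w) ->
  forall j, (j <= K)%N -> exists N, pQ d %| pQ (CP M (shiftE N (mumin E j))).
Proof.
move=> h; elim=> [|j IH] jK.
  have [N [w e]] := h 0%N (leq0n _); exists N.
  have e' : 'X^N * CP M (mumin E 0) = d * w by rewrite -e hq_CP.
  rewrite CP_shift ?mumin0 // e' rmorphM /=.
  exact: dvdp_mulIl.
have [N1 h1] := IH (ltnW jK).
have [N2 [w e]] := h j.+1 jK.
have h2 : pQ d %| pQ (CP M (shiftE N2 (E j.+1))).
  have e' : 'X^N2 * CP M (E j.+1) = d * w by rewrite -e hq_CP.
  by rewrite CP_shift ?Eh0 // e' rmorphM /= dvdp_mulIl.
exists (minn N1 N2).
rewrite pQ_CP in h1; rewrite pQ_CP in h2.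
have := @CPF_gcd2 _ _ _ (fun a b _ _ ab => coprime_PQ a b ab) _ _ _ h1 h2.
rewrite -pQ_CP (@CP_ext M _ (shiftE (minn N1 N2) (mumin E j.+1))) ?pQ_CP //.
by move=> m _; rewrite /shiftE /=; case: eqP.
Qed.

Lemma gcd_divides (d : laurent) :
  (forall i, (i <= K)%N -> ldvd d (lpoly (hq l K i))) ->
  ldvd d (lpoly (CP M (mumin E K))).
Proof.
move=> h.
have h' : forall i, (i <= K)%N -> exists N w, 'X^N * hq l K i = d.1 * w.
  by move=> i iK; apply: ldvd_lpoly_ex; apply: h.
have [N hN] := gcd_step _ h' K (leqnn K).
rewrite CP_shift ?mumin0 // dvdp_rat_int in hN.
have [r er] := dvdpP_int hN.
have [N0 [w0 e0]] := h' 0%N (leq0n _).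
have mon : ('X^N0 * hq l K 0) \is monic.
  by rewrite monicMl ?monicXn // hq_CP // CP_monic.
have zu : (zcontents d.1 == 1) || (zcontents d.1 == -1).
  have := @intUnitRing.unitzPl (zcontents d.1) (zcontents w0).
  rewrite qualifE; apply.
  by rewrite mulrC -zcontentsM -e0 zcontents_monic.
have ep := zpolyEprim d.1.
have [c [hc ec]] : exists c : int, c * c = 1 /\ zprimitive d.1 = c *: d.1.
  move: zu => /orP [] /eqP hz; rewrite hz in ep.
    by exists 1; rewrite mulr1 scale1r {2}ep scale1r.
  exists (-1); rewrite mulrNN mulr1; split => //.
  by rewrite {2}ep scalerA mulrNN mulr1 scale1r.
exists ((c *: r) * 'X^(d.2), N).
rewrite /leqL /lmul /lpoly /= expr0 mulr1 exprD mulrA [_ * 'X^N]mulrC er ec.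
by rewrite -!scalerAl; congr (_ *: _); rewrite [RHS]mulrC mulrA.
Qed.
End GcdPart.

Lemma divA3 x y m : (0 < m)%N -> ((x + y + 1) %/ m <= x %/ m + y %/ m + 1)%N.
Proof.
move=> m0.
have ex := divn_eq x m; have ey := divn_eq y m; have exy := divn_eq (x + y + 1) m.
have rx := ltn_pmod x m0; have ry := ltn_pmod y m0; have rxy := ltn_pmod (x+y+1) m0.
nia.
Qed.

Lemma divA2 k m : (0 < m)%N -> (m <= k)%N -> ((k - m) %/ m = k %/ m - 1)%N.
Proof.
move=> m0 mk. have e : k = ((k - m) + 1 * m)%N by rewrite mul1n subnK.
by rewrite {2}e divnDMl // addnK.
Qed.

Section Expo.
Variables l k : nat.
Hypothesis hk1 : (1 <= k)%N.
Hypothesis hkl : (k <= l)%N.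
Local Notation n := (l - k).+1.
Local Notation K := k.-1.
Local Notation E := (Eh l K).
Local Notation mu := (mumin E K).
Local Notation nu := (E K).

Lemma lnK : l = (n + K)%N.
Proof. lia. Qed.

Lemma nu_div m : (0 < m)%N -> nu m = (K %/ m)%N.
Proof. by move=> m0; rewrite /Eh subnn big_ord0 add0n sum_ex_div. Qed.

Lemma kdiv m : (0 < m)%N -> (k %/ m = ex k m + K %/ m)%N.
Proof.
move=> m0; have ek : k = K.+1 by lia.
by rewrite {1}ek divnS // /ex m0 -ek.
Qed.

Lemma mu_upper m : (0 < m)%N -> (m %| n)%N -> (m <= k)%N -> (mu m <= k %/ m - 1)%N.
Proof.
move=> m0 mn mk.
have h := mumin_le E K m.-1 m.
rewrite (@Eh_div l K m.-1 m n m0 mn lnK) in h; last by lia.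
have e1 : (K - m.-1 = k - m)%N by lia.
rewrite e1 divA2 // (@divn_small m.-1 m) ?addn0 in h; last by lia.
by apply: h; lia.
Qed.

Lemma mu_lower m : (0 < m)%N -> (m %| n)%N -> (k %/ m - 1 <= mu m)%N.
Proof.
move=> m0 mn; apply: mumin_ge => i iK.
rewrite (@Eh_div l K i m n m0 mn lnK iK).
have := divA3 (K - i) i m m0.
have -> : (K - i + i + 1 = k)%N by lia.
by move: (k %/ m)%N ((K - i) %/ m)%N (i %/ m)%N => a b c; lia.
Qed.

Definition gtl := gt k n.
Definition Ae m := (ex n m - gtl m)%N.
Definition Be m := ((ex k m + (nu m - mu m)) - gtl m)%N.

Lemma gt_le_exn m : (gtl m <= ex n m)%N.
Proof. by rewrite /gtl /gt /ex; case: m => [|m] //=; case: (m.+1 <= k)%N. Qed.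

Lemma gt_le_B m : (gtl m <= ex k m + (nu m - mu m))%N.
Proof.
rewrite /gtl /gt; case h: [&& (0 < m), (m <= k) & (m %| n)]%N => //.
move/and3P: h => [m0 mk mn].
have := kdiv m m0; have := nu_div m m0; have := mu_upper m m0 mn mk.
have : (0 < k %/ m)%N by rewrite divn_gt0.
move: (k %/ m)%N (K %/ m)%N (mu m) (nu m) => a b c d; lia.
Qed.

Lemma Ae_pos a : (0 < Ae a)%N -> [/\ (0 < a)%N, (a %| n)%N & (k < a)%N].
Proof.
rewrite /Ae /gtl /gt /ex.
case: (0 < a)%N => //=; case: (a %| n)%N => //=; rewrite andbT.
by case: (leqP a k).
Qed.

Lemma Be_pos b : (0 < Be b)%N -> [/\ (0 < b)%N, (b <= k)%N & ~~ (b %| n)%N].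
Proof.
rewrite /Be => h.
have b0 : (0 < b)%N.
  move: h; case: b => // ; by rewrite /ex Eh0 /=.
have bk : (b <= k)%N.
  case: leqP => // kb; move: h.
  rewrite (nu_div b b0) divn_small; last lia.
  have -> : ex k b = 0%N.
    rewrite /ex; case kd: (b %| k)%N; rewrite ?andbF //.
    by have := dvdn_leq hk1 kd; lia.
  by rewrite sub0n.
split => //; apply/negP => bn.
have gt1 : gtl b = 1%N by rewrite /gtl /gt b0 bk bn.
move: h; rewrite gt1.
have := kdiv b b0; have := nu_div b b0; have := mu_lower b b0 bn.
have : (ex k b <= 1)%N by rewrite /ex; case: (_ && _).
move: (k %/ b)%N (K %/ b)%N (mu b) (nu b) (ex k b) => a c d e f; lia.
Qed.
End Expo.

Lemma alg_fwd (F : fieldType) (x y z N Kq T f u' gt Ae Be : F) :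
  N = gt * Ae -> Kq * T = gt * Be -> f = T * u' ->
  x = y * N + z * (Kq * f) -> x = (y * Ae + z * u' * Be) * gt.
Proof.
move=> hN hKT hf ->.
have e : Kq * f = gt * Be * u' by rewrite hf mulrA hKT.
rewrite hN e; ring.
Qed.

Lemma alg_bwd (F : fieldType) (x w N Kq T f u u' gt Ae Be al be : F) :
  N = gt * Ae -> Kq * T = gt * Be -> f = T * u' -> u * u' = 1 -> al * Ae + be * Be = 1 ->
  x = w * gt -> x = (w * al) * N + (w * be * u) * (Kq * f).
Proof.
move=> hN hKT hf huu hb ->.
have u0 : u != 0 by apply/eqP => u0; move: huu; rewrite u0 mul0r => /eqP; rewrite eq_sym oner_eq0.
have hu' : u' = u^-1 by rewrite -[u']mul1r -(mulVf u0) -mulrA huu mulr1.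
have e : Kq * f = gt * Be * u' by rewrite hf mulrA hKT.
rewrite hN e hu' -{1}[w * gt]mulr1 -hb.
field; exact: u0.
Qed.

Lemma leqL_phi_ideal x y z a b :
  leqL x (ladd (lmul y a) (lmul z b)) <-> phi x = phi y * phi a + phi z * phi b.
Proof. by rewrite leqL_phi phi_add !phi_mul. Qed.

Lemma hqK l K : hq l K K = qfact K.
Proof. by rewrite /hq subnn /qfall big_ord0 mul1r. Qed.

Theorem lemma4p4 (l k : nat) (hk1 : (1 <= k)%N) (hkl : (k <= l)%N) :
  (exists g : laurent, lgcd (fun i => lpoly (hq l k.-1 i)) k.-1 g) /\
  (forall g : laurent, lgcd (fun i => lpoly (hq l k.-1 i)) k.-1 g ->
     ldvd g (lpoly (qfact k.-1)) /\
     (forall f : laurent, leqL (lmul f g) (lpoly (qfact k.-1)) ->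
        ideal2_eq_principal (lpoly (qnum (l - k).+1))
                            (lmul (lpoly (qnum k)) f)
                            (lpoly (gtilde l k)))).
Proof.
set K := k.-1.
have Kl : (K <= l)%N by rewrite /K; lia.
set M := l.+1.
set E := Eh l K.
set mu := mumin E K.
set G := CP M mu.
have Gdiv : forall i, (i <= K)%N -> ldvd (lpoly G) (lpoly (hq l K i)).
  move=> i iK; exists (lpoly (CP M (fun m => E i m - mu m)%N)).
  rewrite /leqL /lmul /lpoly /= hq_CP // (@CP_split M mu (E i)); first by rewrite addn0 expr0 !mulr1 mulrC.
  by move=> m _; apply: mumin_le.
have gcd0 : lgcd (fun i => lpoly (hq l K i)) K (lpoly G).
  by split => // d hd; apply: gcd_divides.
split; first by exists (lpoly G).
move=> g [gdiv gmax].
split; first by rewrite -(hqK l K); apply: gdiv.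
move=> f hf.
have [u hu] : exists u, phi g = phi u * G%:F.
  by have := gmax (lpoly G) Gdiv; rewrite ldvd_phi phi_lpoly.
have [u' hu'] : exists u', G%:F = phi u' * phi g.
  by have := gcd_divides l K Kl g gdiv; rewrite ldvd_phi phi_lpoly.
have G0 : G%:F != 0 :> FF by rewrite tofrac_eq0 CP_neq0.
have huu : phi u * phi u' = 1.
  by apply: (mulIf G0); rewrite mul1r -mulrA mulrCA -hu -hu'.
set T := CP M (fun m => E K m - mu m)%N.
have hqT : qfact K = G * T.
  by rewrite -(hqK l K) hq_CP // (@CP_split M mu (E K)) // => m _; apply: mumin_le.
have hfT : phi f = T%:F * phi u'.
  move/leqL_phi: hf; rewrite phi_mul phi_lpoly hqT tofracM hu mulrA => hf.
  have hfu : phi f * phi u = T%:F by apply: (mulIf G0); rewrite hf mulrC.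
  by rewrite -hfu -mulrA huu mulr1.
set n := (l - k).+1.
have n0 : (0 < n)%N by [].
have nM : (n < M)%N by rewrite /n /M; lia.
have kM : (k < M)%N by rewrite /M; lia.
set CA := CP M (Ae l k); set CB := CP M (Be l k); set Cg := CP M (gtl l k).
have hN : (qnum n)%:F = Cg%:F * CA%:F :> FF.
  rewrite -tofracM /qnum (@Xn1_CP M n) // (@CP_split M (gtl l k) (ex n)) //.
  by move=> m _; apply: gt_le_exn.
have hKT : (qnum k)%:F * T%:F = Cg%:F * CB%:F :> FF.
  rewrite -!tofracM /qnum (@Xn1_CP M k) // -CP_add.
  rewrite (@CP_split M (gtl l k) (fun m => ex k m + (E K m - mu m))%N) //.
  by move=> m _; apply: gt_le_B.
have hgt : gtilde l k = Cg by rewrite gtilde_CP.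
have [al [be hab]] : comax CA CB.
  apply: comax_CP => a b _ _ ha hb.
  have [a0 an ka] := Ae_pos l k a ha.
  have [b0 bk bn] := Be_pos l k hk1 hkl b hb.
  exact: (comax_Phi n k a b n0 b0 bk ka an bn).
have habF : al%:F * CA%:F + be%:F * CB%:F = 1 :> FF.
  by rewrite -!tofracM -tofracD hab tofrac1.
move=> x; rewrite hgt; split.
  move=> [y [z /leqL_phi_ideal hx]].
  rewrite !phi_mul !phi_lpoly in hx.
  have hx' := @alg_fwd _ _ _ _ _ _ _ _ _ _ _ _ hN hKT hfT hx.
  exists (ladd (lmul y (lpoly CA)) (lmul (lmul z u') (lpoly CB))).
  by apply/leqL_phi; rewrite phi_mul phi_add !phi_mul !phi_lpoly.
move=> [w /leqL_phi hx]; rewrite phi_mul phi_lpoly in hx.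
have hx' := @alg_bwd _ _ _ _ _ _ _ _ _ _ _ _ _ _ hN hKT hfT huu habF hx.
exists (lmul w (lpoly al)), (lmul (lmul w (lpoly be)) u).
by apply/leqL_phi_ideal; rewrite !phi_mul !phi_lpoly.
Qed.
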